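(* Let $(\mathcal{X},d)$ be a metric space, let $M>0$ be an integer, and let $x_o, x_1, \ldots, x_M, x_1', \ldots, x_M'$ be an $M$-configuration in $(\mathcal{X},d)$. Let $1 \le j \le M$ be any index and let $S \subset \{1,\ldots,M\}$ be any subset with $|S|>1$. Then the set $A = \{x_o, x_j'\} \cup \{x_i : i \in S\}$ has a nice $2$-clustering if and only if $j \notin S$.
   Context: A clustering of a set $A$ (with distance $d$) is a set of nonempty, pairwise disjoint subsets (clusters) whose union is $A$; a $k$-clustering is a clustering with exactly $k$ clusters. Write $x \sim_{\mathcal C} y$ if $x,y$ lie in the same cluster of $\mathcal C$, and $x \not\sim_{\mathcal C} y$ otherwise. A clustering $\mathcal C$ of $(A,d)$ is nice if for all $x,y,z\in A$: $d(y,x)<d(z,x)$ whenever $x\sim_{\mathcal C} y$ and $x\not\sim_{\mathcal C} z$. For an integer $M>0$, an $M$-configuration in a metric space $(\mathcal X,d)$ is a collection of $2M+1$ points $x_o, x_1,\ldots,x_M, x_1',\ldots,x_M'\in\mathcal X$ such that: (i) all pairwise distances among these points lie in $[1,2]$; (ii) $d(x_o,x_i)\in(3/2,2]$ and $d(x_o,x_i')\in(3/2,2]$ for all $i\ge 1$; (iii) $d(x_i,x_j), d(x_i',x_j'), d(x_i,x_j')\in[1,3/2]$ for all $i\neq j$, $i,j\ge1$; (iv) $d(x_i,x_i')>d(x_o,x_i)$ for all $i\ge 1$. *)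

(* Defs.v *)
From Stdlib Require Import Reals List.
Open Scope R_scope.

Definition is_metric {X : Type} (d : X -> X -> R) : Prop :=
  (forall x y, 0 <= d x y) /\
  (forall x y, d x y = 0 <-> x = y) /\
  (forall x y, d x y = d y x) /\
  (forall x y z, d x z <= d x y + d y z).

Definition is_k_clustering {X : Type} (A : X -> Prop) (k : nat)
    (C : nat -> X -> Prop) : Prop :=
  (forall i, (i < k)%nat -> exists x, C i x) /\
  (forall i j x, (i < k)%nat -> (j < k)%nat -> i <> j -> C i x -> C j x -> False) /\
  (forall i x, (i < k)%nat -> C i x -> A x) /\
  (forall x, A x -> exists i, (i < k)%nat /\ C i x).

Definition same_cluster {X : Type} (k : nat) (C : nat -> X -> Prop) (x y : X) : Prop :=
  exists i, (i < k)%nat /\ C i x /\ C i y.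

Definition is_nice {X : Type} (d : X -> X -> R) (A : X -> Prop) (k : nat)
    (C : nat -> X -> Prop) : Prop :=
  forall x y z, A x -> A y -> A z ->
    same_cluster k C x y -> ~ same_cluster k C x z -> d y x < d z x.

Definition has_nice_k_clustering {X : Type} (d : X -> X -> R) (A : X -> Prop)
    (k : nat) : Prop :=
  exists C, is_k_clustering A k C /\ is_nice d A k C.

Definition in12 (r : R) : Prop := 1 <= r <= 2.

Definition M_configuration {X : Type} (d : X -> X -> R) (M : nat)
    (xo : X) (x x' : nat -> X) : Prop :=
  let idx i := (1 <= i <= M)%nat in
  (forall i, idx i -> in12 (d xo (x i)) /\ in12 (d xo (x' i))) /\
  (forall i j, idx i -> idx j -> i <> j ->
      in12 (d (x i) (x j)) /\ in12 (d (x' i) (x' j))) /\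
  (forall i j, idx i -> idx j -> in12 (d (x i) (x' j))) /\
  (forall i, idx i -> 3/2 < d xo (x i) <= 2 /\ 3/2 < d xo (x' i) <= 2) /\
  (forall i j, idx i -> idx j -> i <> j ->
      (1 <= d (x i) (x j) <= 3/2) /\ (1 <= d (x' i) (x' j) <= 3/2) /\
      (1 <= d (x i) (x' j) <= 3/2)) /\
  (forall i, idx i -> d (x i) (x' i) > d xo (x i)).

(* Main.v *)
Require Import Defs.
From Stdlib Require Import Reals List Lra Lia Classical.
Open Scope R_scope.

Theorem mainTheorem1 (X : Type) (d : X -> X -> R) (M : nat)
    (xo : X) (x x' : nat -> X) (j : nat) (S : list nat) :
  is_metric d ->
  (0 < M)%nat ->
  M_configuration d M xo x x' ->
  (1 <= j <= M)%nat ->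
  NoDup S ->
  (forall i, In i S -> (1 <= i <= M)%nat) ->
  (1 < length S)%nat ->
  (has_nice_k_clustering d
     (fun w => w = xo \/ w = x' j \/ exists i, In i S /\ w = x i) 2
   <-> ~ In j S).
Proof.
  intros [Dp [Dz [Ds Dt]]] HM Hc Hj HND HS HL.
  unfold M_configuration in Hc; cbv zeta in Hc.
  destruct Hc as [_ [_ [_ [H4 [H5 H6]]]]].
  assert (d0 : forall w, d w w = 0) by (intro w; apply Dz; reflexivity).
  assert (dox : forall i, (1 <= i <= M)%nat -> 3/2 < d xo (x i)) by (intros i Hi; apply (H4 i Hi)).
  assert (dox' : forall i, (1 <= i <= M)%nat -> 3/2 < d xo (x' i)) by (intros i Hi; apply (H4 i Hi)).
  assert (dxx : forall a b, (1 <= a <= M)%nat -> (1 <= b <= M)%nat -> d (x a) (x b) <= 3/2).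
  { intros a b Ha Hb. destruct (Nat.eq_dec a b). subst; rewrite d0; lra.
    destruct (H5 a b Ha Hb n) as [[_ h] _]; lra. }
  assert (dxx' : forall a b, (1 <= a <= M)%nat -> (1 <= b <= M)%nat -> a <> b -> d (x a) (x' b) <= 3/2).
  { intros a b Ha Hb n. destruct (H5 a b Ha Hb n) as [_ [_ [_ h]]]; lra. }
  split.
  - intros [C [[Cne [Cdis [CA Ccov]]] Hnice]] HjS.
    set (A := fun w => w = xo \/ w = x' j \/ exists i, In i S /\ w = x i) in *.
    set (same := same_cluster 2 C) in *.
    assert (sym : forall a b, same a b -> same b a).
    { intros a b [i [Hi [Ha Hb]]]; exists i; auto. }
    assert (trans : forall a b c, same a b -> same b c -> same a c).
    { intros a b c [i [Hi [Ha Hb]]] [i' [Hi' [Hb' Hc']]].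
      destruct (Nat.eq_dec i i'). subst; exists i'; auto.
      exfalso; apply (Cdis i i' b); auto. }
    assert (two : forall a b c, A a -> A b -> A c -> ~ same a b -> ~ same a c -> same b c).
    { intros a b c Aa Ab Ac nab nac.
      destruct (Ccov a Aa) as [ia [Hia Ca]].
      destruct (Ccov b Ab) as [ib [Hib Cb]].
      destruct (Ccov c Ac) as [ic [Hic Cc]].
      destruct (Nat.eq_dec ia ib). subst; exfalso; apply nab; exists ib; auto.
      destruct (Nat.eq_dec ia ic). subst; exfalso; apply nac; exists ic; auto.
      assert (ib = ic) by lia. subst; exists ic; auto. }
    assert (exq : exists q, A q /\ ~ same xo q).
    { destruct (Cne 0%nat ltac:(lia)) as [a Ca].
      destruct (Cne 1%nat ltac:(lia)) as [b Cb].
      assert (nab : ~ same a b).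
      { intros [i [Hi [Ha' Hb']]]. destruct (Nat.eq_dec i 0).
        subst; apply (Cdis 0 1 b)%nat; auto.
        assert (i = 1%nat) by lia. subst; apply (Cdis 0 1 a)%nat; auto. }
      destruct (classic (same xo a)) as [h|h].
      + exists b; split. apply (CA 1%nat); auto.
        intro h'; apply nab; apply trans with xo; auto.
      + exists a; split; auto. apply (CA 0%nat); auto. }
    assert (exk : exists k, In k S /\ k <> j).
    { destruct S as [|a [|b S']]; simpl in HL; try lia.
      inversion HND; subst. destruct (Nat.eq_dec a j).
      - exists b; split; simpl; auto. intro; subst; apply H1; simpl; auto.
      - exists a; split; simpl; auto. }
    destruct exk as [k [Hk Hkj]].
    assert (Ak : (1 <= k <= M)%nat) by auto.
    assert (Axo : A xo) by (left; reflexivity).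
    assert (Ax' : A (x' j)) by (right; left; reflexivity).
    assert (Axk : A (x k)) by (right; right; exists k; auto).
    assert (Axj : A (x j)) by (right; right; exists j; auto).
    destruct (classic (same xo (x k))) as [sk|nsk].
    + destruct exq as [q [Aq nq]].
      assert (h := Hnice (x k) xo q Axk Axo Aq (sym _ _ sk)
                     (fun h => nq (trans _ _ _ sk h))).
      pose proof (dox k Ak).
      destruct Aq as [->|[->|[i [Hi ->]]]].
      * exfalso; apply nq; destruct (Ccov xo Axo) as [i0 [? ?]]; exists i0; auto.
      * pose proof (dxx' k j Ak Hj Hkj). rewrite (Ds (x' j) (x k)) in h. lra.
      * pose proof (dxx i k (HS i Hi) Ak). lra.
    + destruct (classic (same xo (x j))) as [sj|nsj].
      * assert (h := Hnice (x j) xo (x k) Axj Axo Axk (sym _ _ sj)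
                     (fun h => nsk (trans _ _ _ sj h))).
        pose proof (dox j Hj). pose proof (dxx k j Ak Hj). lra.
      * destruct (classic (same xo (x' j))) as [sj'|nsj'].
        -- assert (h := Hnice (x' j) xo (x k) Ax' Axo Axk (sym _ _ sj')
                     (fun h => nsk (trans _ _ _ sj' h))).
           pose proof (dox' j Hj). pose proof (dxx' k j Ak Hj Hkj). lra.
        -- assert (s := two xo (x j) (x' j) Axo Axj Ax' nsj nsj').
           assert (h := Hnice (x j) (x' j) xo Axj Ax' Axo s
                     (fun h => nsj (sym _ _ h))).
           pose proof (H6 j Hj). rewrite (Ds (x' j) (x j)) in h. lra.
  - intros HjS.
    exists (fun n w => (n = 0%nat /\ w = xo) \/
                       (n = 1%nat /\ (w = x' j \/ exists i, In i S /\ w = x i))).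
    set (G := fun w => w = x' j \/ exists i, In i S /\ w = x i).
    assert (farxo : forall w, G w -> 3/2 < d xo w).
    { intros w [->|[i [Hi ->]]]; [apply dox'; auto | apply dox; auto]. }
    assert (notxo : forall w, G w -> xo <> w).
    { intros w Hw e. pose proof (farxo w Hw). rewrite <- e, d0 in H. lra. }
    assert (near : forall a b, G a -> G b -> d b a <= 3/2).
    { intros a b [->|[i [Hi ->]]] [->|[i' [Hi' ->]]].
      - rewrite d0; lra.
      - apply dxx'; auto. intro; subst; auto.
      - rewrite Ds; apply dxx'; auto. intro; subst; auto.
      - apply dxx; auto. }
    split; [split; [|split; [|split]]|].
    + intros i Hi. destruct (Nat.eq_dec i 0).
      * exists xo; left; auto.
      * exists (x' j); right; split; [lia|left; auto].
    + intros i i' w Hi Hi' ne [[e1 e2]|[e1 Hw]] [[e3 e4]|[e3 Hw']]; subst; try lia.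
      * apply (notxo xo Hw'); auto.
      * apply (notxo xo Hw); auto.
    + intros i w Hi [[_ ->]|[_ H]]; [left; auto | right; exact H].
    + intros w [->|Hw].
      * exists 0%nat; split; [lia| left; auto].
      * exists 1%nat; split; [lia| right; split; auto].
    + intros a b c Aa Ab Ac [i [Hi [Ca Cb]]] nac.
      destruct Ca as [[-> ->]|[-> Ha]].
      * destruct Cb as [[_ ->]|[e _]]; [|lia].
        destruct Ac as [->|Hc].
        -- exfalso; apply nac; exists 0%nat; split; [lia| split; left; auto].
        -- pose proof (farxo c Hc). rewrite d0, Ds. lra.
      * destruct Cb as [[e _]|[_ Hb]]; [lia|].
        destruct Ac as [->|Hc].
        -- pose proof (farxo a Ha). pose proof (near a b Ha Hb). rewrite (Ds xo a) in *. lra.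
        -- exfalso; apply nac; exists 1%nat; split; [lia| split; right; auto].
Qed.
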